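(* Let $A$ be a Dedekind domain. The following are equivalent: (1) $A$ has torsion divisor class group; (2) every overring of $A$ is a localization of $A$; (3) every overring of $A$ is well-centered on $A$; (4) there is no overring $B$ of $A$ with $B\neq A$, $B=A[b]$ for a single element $b$, and $\mathcal U(B)=\mathcal U(A)$.
   Context: An overring of $A$ is a subring of the field of fractions of $A$ containing $A$. $\mathcal U(R)$ is the unit group of a ring $R$. $B$ is well-centered on $A$ if for each $b\in B$ there is $u\in\mathcal U(B)$ with $ub\in A$. $B$ is a localization of $A$ if $B=S^{-1}A$ for a multiplicatively closed set $S$ of nonzero elements of $A$. *)

(* Defs.v *)
(* Rings are modelled as subrings of a fixed field K. *)
From mathcomp Require Import all_boot all_algebra.
Set Implicit Arguments. Unset Strict Implicit. Unset Printing Implicit Defensive.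
Import GRing.Theory.
Local Open Scope ring_scope.

Section Defs.
Variable K : fieldType.

Definition subring (S : K -> Prop) : Prop :=
  [/\ S 0, S 1, (forall x y, S x -> S y -> S (x - y))
    & (forall x y, S x -> S y -> S (x * y))].

Definition is_frac_field (A : K -> Prop) : Prop :=
  forall x, exists a b, [/\ A a, A b, b != 0 & x = a / b].

Definition submod (A I : K -> Prop) : Prop :=
  [/\ I 0, (forall x y, I x -> I y -> I (x + y))
    & (forall a x, A a -> I x -> I (a * x))].

Definition ideal (A I : K -> Prop) : Prop :=
  submod A I /\ (forall x, I x -> A x).

Definition span (A : K -> Prop) (s : seq K) (x : K) : Prop :=
  exists c : 'I_(size s) -> K,
    (forall i, A (c i)) /\ x = \sum_(i < size s) c i * s`_i.

Definition noetherian (A : K -> Prop) : Prop :=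
  forall I, ideal A I ->
    exists s : seq K, (forall y, y \in s -> A y) /\ forall x, I x <-> span A s x.

Definition integrally_closed (A : K -> Prop) : Prop :=
  forall x : K, (exists p : {poly K},
     [/\ p \is monic, (forall i, A p`_i) & root p x]) -> A x.

Definition prime_ideal (A P : K -> Prop) : Prop :=
  [/\ ideal A P, ~ P 1 & forall x y, A x -> A y -> P (x * y) -> P x \/ P y].

Definition maximal_ideal (A P : K -> Prop) : Prop :=
  [/\ ideal A P, ~ P 1 &
     forall J, ideal A J -> (forall x, P x -> J x) ->
       J 1 \/ (forall x, J x <-> P x)].

Definition dim_le1 (A : K -> Prop) : Prop :=
  forall P, prime_ideal A P -> (exists x, P x /\ x != 0) -> maximal_ideal A P.

Definition dedekind (A : K -> Prop) : Prop :=
  [/\ subring A, is_frac_field A, noetherian A, integrally_closed A & dim_le1 A].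

Definition frac_ideal (A I : K -> Prop) : Prop :=
  [/\ submod A I, (exists x, I x /\ x != 0)
    & exists d, [/\ A d, d != 0 & forall x, I x -> A (d * x)]].

Definition idprod (I J : K -> Prop) (x : K) : Prop :=
  exists s : seq (K * K),
    (forall p, p \in s -> I p.1 /\ J p.2) /\ x = \sum_(p <- s) p.1 * p.2.

Fixpoint idpow (A I : K -> Prop) (n : nat) : K -> Prop :=
  match n with
  | 0 => A
  | n'.+1 => idprod (idpow A I n') I
  end.

Definition principal (A I : K -> Prop) : Prop :=
  exists y, forall x, I x <-> exists a, A a /\ x = a * y.

(* the (divisor = ideal) class group of A is torsion *)
Definition torsion_class_group (A : K -> Prop) : Prop :=
  forall I, frac_ideal A I -> exists n, (0 < n)%N /\ principal A (idpow A I n).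

Definition overring (A B : K -> Prop) : Prop :=
  subring B /\ (forall x, A x -> B x).

Definition unit_in (R : K -> Prop) (u : K) : Prop :=
  [/\ R u, u != 0 & R u^-1].

Definition is_localization (A B : K -> Prop) : Prop :=
  exists S : K -> Prop,
    [/\ (forall s, S s -> A s /\ s != 0), S 1,
        (forall s t, S s -> S t -> S (s * t)) &
        forall x, B x <-> exists a s, [/\ A a, S s & x = a / s]].

Definition well_centered (A B : K -> Prop) : Prop :=
  forall b, B b -> exists u, unit_in B u /\ A (u * b).

Definition gen_by (A B : K -> Prop) (b : K) : Prop :=
  forall x, B x <-> exists p : {poly K}, (forall i, A p`_i) /\ x = p.[b].

End Defs.

(* Main.v *)
Require Import Defs.
From mathcomp Require Import all_boot all_algebra.
From mathcomp Require Import fingroup perm.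
From Stdlib Require Import Classical ClassicalEpsilon FunctionalExtensionality PropExtensionality.
From Stdlib Require List.
From mathcomp Require Import ring.
Set Implicit Arguments. Unset Strict Implicit. Unset Printing Implicit Defensive.
Import GRing.Theory.
Local Open Scope ring_scope.

Section Base.
Variable K : fieldType.
Implicit Types I J L : K -> Prop.

Lemma seteq I J : (forall x, I x <-> J x) -> I = J.
Proof. move=> h; apply: functional_extensionality => x; apply: propositional_extensionality; exact: h. Qed.

Lemma seteq2 I J : (forall x, I x -> J x) -> (forall x, J x -> I x) -> I = J.
Proof. by move=> h1 h2; apply: seteq => x; split; [apply: h1|apply: h2]. Qed.

Lemma ip_mul I J x y : I x -> J y -> idprod I J (x * y).
Proof.
move=> hx hy; exists [:: (x, y)]; split; first by move=> p; rewrite inE => /eqP ->.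
by rewrite big_seq1.
Qed.

Lemma ip_0 I J : idprod I J 0.
Proof. by exists [::]; split => //; rewrite big_nil. Qed.

Lemma ip_add I J x y : idprod I J x -> idprod I J y -> idprod I J (x + y).
Proof.
move=> [s [hs ->]] [t [ht ->]]; exists (s ++ t); split; last by rewrite big_cat.
by move=> p; rewrite mem_cat => /orP [/hs|/ht].
Qed.

Lemma ip_ind I J (L : K -> Prop) : L 0 -> (forall x y, L x -> L y -> L (x + y)) ->
  (forall i j, I i -> J j -> L (i * j)) -> forall x, idprod I J x -> L x.
Proof.
move=> h0 hD hM x [s [hs ->]]; elim: s hs => [|p s IH] hs; first by rewrite big_nil.
rewrite big_cons; apply: hD; last by apply: IH => q qs; apply: hs; rewrite inE qs orbT.
by case: (hs p); rewrite ?inE ?eqxx //; apply: hM.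
Qed.

Lemma ip_sub I J I' J' : (forall x, I x -> I' x) -> (forall x, J x -> J' x) ->
  forall x, idprod I J x -> idprod I' J' x.
Proof.
move=> h1 h2; apply: ip_ind; [exact: ip_0 | exact: ip_add | ].
by move=> i j hi hj; apply: ip_mul; [apply: h1|apply: h2].
Qed.

Lemma ipC I J : idprod I J = idprod J I.
Proof.
have h I' J' : forall x, idprod I' J' x -> idprod J' I' x.
  apply: ip_ind; [exact: ip_0 | exact: ip_add | ].
  by move=> i j hi hj; rewrite mulrC; apply: ip_mul.
by apply: seteq2; apply: h.
Qed.

Lemma ipA I J L : idprod (idprod I J) L = idprod I (idprod J L).
Proof.
apply: seteq2.
  apply: ip_ind; [exact: ip_0 | exact: ip_add | ].
  move=> w l hw hl; move: w hw; apply: ip_ind; first by rewrite mul0r; apply: ip_0.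
    by move=> x y hx hy; rewrite mulrDl; apply: ip_add.
  by move=> i j hi hj; rewrite -mulrA; apply: ip_mul => //; apply: ip_mul.
apply: ip_ind; [exact: ip_0 | exact: ip_add | ].
move=> i w hi hw; move: w hw; apply: ip_ind; first by rewrite mulr0; apply: ip_0.
  by move=> x y hx hy; rewrite mulrDr; apply: ip_add.
by move=> j l hj hl; rewrite mulrA; apply: ip_mul => //; apply: ip_mul.
Qed.

Lemma ipAC I J L : idprod I (idprod J L) = idprod J (idprod I L).
Proof. by rewrite -!ipA (ipC I J). Qed.

Variable A : K -> Prop.
Hypothesis sA : subring A.

Lemma A0 : A 0. Proof. by case: sA. Qed.
Lemma A1 : A 1. Proof. by case: sA. Qed.
Lemma AB x y : A x -> A y -> A (x - y). Proof. by case: sA => _ _ h _; apply: h. Qed.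
Lemma AM x y : A x -> A y -> A (x * y). Proof. by case: sA => _ _ _ h; apply: h. Qed.
Lemma AN x : A x -> A (- x). Proof. by move=> h; rewrite -sub0r; apply: AB => //; apply: A0. Qed.
Lemma AD x y : A x -> A y -> A (x + y).
Proof. by move=> hx hy; rewrite -(opprK y); apply: AB => //; apply: AN. Qed.

Lemma submod_ip I J : submod A I -> submod A (idprod I J).
Proof.
case=> I0 ID IM; split; [exact: ip_0 | exact: ip_add | ].
move=> a x ha; move: x. apply: (@ip_ind I J (fun x => idprod I J (a * x))); first by rewrite mulr0; apply: ip_0.
  by move=> x1 y hx hy; rewrite mulrDr; apply: ip_add.
by move=> i j hi hj; rewrite mulrA; apply: ip_mul => //; apply: IM.
Qed.

Lemma submod_ipr I J : submod A J -> submod A (idprod I J).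
Proof. by rewrite ipC; apply: submod_ip. Qed.

Lemma ipAl I : submod A I -> idprod A I = I.
Proof.
case=> I0 ID IM; apply: seteq2.
  by apply: (@ip_ind _ _ I) => // i j hi hj; apply: IM.
by move=> x hx; rewrite -(mul1r x); apply: ip_mul => //; apply: A1.
Qed.

Lemma ipAr I : submod A I -> idprod I A = I.
Proof. by rewrite ipC; apply: ipAl. Qed.

Lemma submodA : submod A A.
Proof. split; [exact: A0 | exact: AD | exact: AM]. Qed.

Lemma ideal_ip I J : ideal A I -> ideal A J -> ideal A (idprod I J).
Proof.
move=> [hI hIA] [hJ hJA]; split; first exact: submod_ip.
by apply: (@ip_ind _ _ A); [exact: A0 | exact: AD | move=> i j /hIA hi /hJA hj; exact: AM].
Qed.

End Base.

Section Two.
Variable K : fieldType.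
Implicit Types I J L : K -> Prop.
Variable A : K -> Prop.
Hypothesis sA : subring A.

Definition inv I := fun z : K => forall i, I i -> A (z * i).
Definition pr (y : K) := fun x : K => exists a, A a /\ x = a * y.

Lemma principalE I : principal A I <-> exists y, I = pr y.
Proof.
split=> [[y hy]|[y ->]]; last by exists y.
by exists y; apply: seteq.
Qed.

Lemma pr_in y : pr y y.
Proof. by exists 1; split; [apply: A1|rewrite mul1r]. Qed.

Lemma submod_pr y : submod A (pr y).
Proof.
split; first by exists 0; split; [apply: A0|rewrite mul0r].
  by move=> x z [a [ha ->]] [b [hb ->]]; exists (a + b); split; [apply: AD|rewrite mulrDl].
by move=> a x ha [b [hb ->]]; exists (a * b); split; [apply: AM|rewrite mulrA].
Qed.

Lemma pr1 : pr 1 = A.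
Proof.
apply: seteq2; first by move=> x [a [ha ->]]; rewrite mulr1.
by move=> x hx; exists x; rewrite mulr1.
Qed.

Lemma ip_pr x y : idprod (pr x) (pr y) = pr (x * y).
Proof.
apply: seteq2.
  apply: (@ip_ind _ _ _ (pr (x*y))); [case: (submod_pr (x*y)) => //|case: (submod_pr (x*y)) => //|].
  by move=> i j [a [ha ->]] [b [hb ->]]; exists (a * b); split; [apply: AM|rewrite mulrACA].
by move=> z [a [ha ->]]; rewrite mulrA; apply: ip_mul; [by exists a | apply: pr_in].
Qed.

Lemma submod_idpow I n : submod A I -> submod A (idpow A I n).
Proof. by move=> h; case: n => [|n] /=; [apply: submodA | apply: submod_ipr]. Qed.

Lemma idpowS I n : idpow A I n.+1 = idprod (idpow A I n) I.
Proof. by []. Qed.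

Lemma idpow1 I : submod A I -> idpow A I 1 = I.
Proof. by move=> h; rewrite idpowS /= ipAl. Qed.

Lemma idpowD I m n : submod A I -> idpow A I (m + n) = idprod (idpow A I m) (idpow A I n).
Proof.
move=> h; elim: n => [|n IH]; first by rewrite addn0 /= ipAr //; apply: submod_idpow.
by rewrite addnS !idpowS IH ipA.
Qed.

Lemma idpow_ip I J n : submod A I -> submod A J ->
  idpow A (idprod I J) n = idprod (idpow A I n) (idpow A J n).
Proof.
move=> hI hJ; elim: n => [|n IH]; first by rewrite /= ipAl //; apply: submodA.
rewrite !idpowS IH.
by rewrite ipA (ipAC (idpow A J n)) -!ipA.
Qed.

Lemma idpowM I m n : submod A I -> idpow A I (m * n) = idpow A (idpow A I m) n.
Proof.
move=> h; elim: n => [|n IH]; first by rewrite muln0.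
by rewrite mulnS idpowD // IH idpowS ipC.
Qed.

Lemma idpow_pr y n : idpow A (pr y) n = pr (y ^+ n).
Proof.
elim: n => [|n IH]; first by rewrite expr0 pr1.
by rewrite idpowS IH ip_pr exprSr.
Qed.

Lemma idpow_sub I J n : (forall x, I x -> J x) -> forall x, idpow A I n x -> idpow A J n x.
Proof.
move=> h; elim: n => [|n IH] //= x; apply: ip_sub => //.
Qed.

Lemma ideal_idpow I n : ideal A I -> ideal A (idpow A I n).
Proof.
move=> h; elim: n => [|n IH]; first by split; [apply: submodA|].
by rewrite idpowS; apply: ideal_ip.
Qed.

Hypothesis nA : noetherian A.

Lemma span_in s y : y \in s -> Defs.span A s y.
Proof.
move=> ys; exists (fun j : 'I_(size s) => ((j : nat) == index y s)%:R); split.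
  by move=> j; case: eqP => _; [apply: A1|apply: A0].
have hi : (index y s < size s)%N by rewrite index_mem.
rewrite (bigD1 (Ordinal hi)) //= eqxx mul1r nth_index // big1 ?addr0 //.
move=> j; rewrite -val_eqE /= => /negbTE ->; by rewrite mul0r.
Qed.

Lemma ideal_span I s : ideal A I -> (forall y, y \in s -> I y) -> forall x, Defs.span A s x -> I x.
Proof.
move=> [[I0 ID IM] _] hs x [c [hc ->]].
apply: (big_ind I) => // i _; apply: IM; [apply: hc|apply: hs; apply: mem_nth; exact: ltn_ord].
Qed.

Lemma maxp (T : (K -> Prop) -> Prop) : (exists I, ideal A I /\ T I) ->
  exists P, [/\ ideal A P, T P & forall J, ideal A J -> T J -> (forall x, P x -> J x) ->
     forall x, J x -> P x].
Proof.
move=> [I0 [hI0 TI0]]; apply: NNPP => hno.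
pose T' := fun I => ideal A I /\ T I.
have H : forall P : {I | T' I}, exists J : {I | T' I},
    (forall x, sval P x -> sval J x) /\ exists x, sval J x /\ ~ sval P x.
  move=> [P [hP TP]]; apply: NNPP => hn; apply: hno; exists P; split=> // J hJ TJ hPJ x Jx.
  apply: NNPP => nPx; apply: hn; exists (exist _ J (conj hJ TJ)); split=> //; by exists x.
pose f P := proj1_sig (constructive_indefinite_description _ (H P)).
have hf P : (forall x, sval P x -> sval (f P) x) /\ exists x, sval (f P) x /\ ~ sval P x.
  exact: (proj2_sig (constructive_indefinite_description _ (H P))).
pose c n := iter n f (exist _ I0 (conj hI0 TI0)).
have cinc m n : (m <= n)%N -> forall x, sval (c m) x -> sval (c n) x.
  move=> /subnK <-; elim: (n - m)%N => [|k IH] //= x hx.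
  by apply: (proj1 (hf _)); apply: IH.
pose U := fun x => exists n, sval (c n) x.
have cid n : ideal A (sval (c n)) by case: (c n) => ? [].
have hU : ideal A U.
  split; last by move=> x [n hn]; case: (cid n) => _; apply.
  split; first by exists 0%N; case: (cid 0%N) => [[]].
    move=> x y [m hm] [n hn]; exists (maxn m n); case: (cid (maxn m n)) => [[_ ID _] _].
    by apply: ID; [apply: (cinc m _ (leq_maxl m n)) | apply: (cinc n _ (leq_maxr m n))].
  by move=> a x ha [n hn]; exists n; case: (cid n) => [[_ _ IM] _]; apply: IM.
have [s [_ hs]] := nA hU.
have [N hN] : exists N, forall y, y \in s -> sval (c N) y.
  have : forall y, y \in s -> U y by move=> y ys; apply/hs; apply: span_in.
  elim: s {hs} => [|y s IH] hsU; first by exists 0%N.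
  have [N hN] := IH (fun z zs => hsU z (@mem_behead _ (y :: s) z zs)).
  have [M hM] := hsU y (mem_head _ _).
  exists (maxn N M) => z; rewrite inE => /orP [/eqP ->|zs].
    by apply: cinc hM; rewrite leq_maxr.
  by apply: cinc (hN z zs); rewrite leq_maxl.
have [x [hx nx]] := proj2 (hf (c N)).
apply: nx; apply: (ideal_span (cid N) hN); apply/hs; exists N.+1; exact: hx.
Qed.

End Two.

Section Three.
Variable K : fieldType.
Variable A : K -> Prop.
Hypothesis sA : subring A.

Definition polyA (p : {poly K}) := forall i, A p`_i.

Lemma polyA_C c : A c -> polyA c%:P.
Proof. by move=> h i; rewrite coefC; case: eqP => _ //; apply: (A0 sA). Qed.
Lemma polyA_X : polyA 'X.
Proof. by move=> i; rewrite coefX; case: eqP => _; [apply: (A1 sA)|apply: (A0 sA)]. Qed.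
Lemma polyA_B p q : polyA p -> polyA q -> polyA (p - q).
Proof. by move=> hp hq i; rewrite coefB; apply: (AB sA). Qed.
Lemma polyA_D p q : polyA p -> polyA q -> polyA (p + q).
Proof. by move=> hp hq i; rewrite coefD; apply: (AD sA). Qed.
Lemma polyA_N p : polyA p -> polyA (- p).
Proof. by move=> hp i; rewrite coefN; apply: (AN sA). Qed.
Lemma polyA_M p q : polyA p -> polyA q -> polyA (p * q).
Proof.
move=> hp hq i; rewrite coefM; apply: (big_ind A); [apply: (A0 sA)|apply: (AD sA)|].
by move=> j _; apply: (AM sA).
Qed.
Lemma polyA_0 : polyA 0. Proof. by apply: polyA_C; apply: (A0 sA). Qed.
Lemma polyA_1 : polyA 1. Proof. by apply: polyA_C; apply: (A1 sA). Qed.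

Lemma horner_in (R : K -> Prop) p b : subring R -> (forall x, A x -> R x) -> polyA p -> R b ->
  R p.[b].
Proof.
move=> sR hAR hp hb; rewrite horner_coef.
apply: (big_ind R); [exact: (A0 sR)|exact: (AD sR)|] => i _.
apply: (AM sR); first exact: hAR.
elim: (i : nat) => [|k IH]; first by rewrite expr0; apply: (A1 sR).
by rewrite exprS; apply: (AM sR).
Qed.

Lemma span_in' (s : seq K) y : y \in s -> Defs.span A s y.
Proof.
move=> ys; exists (fun j : 'I_(size s) => ((j : nat) == index y s)%:R); split.
  by move=> j; case: eqP => _; [apply: (A1 sA)|apply: (A0 sA)].
have hi : (index y s < size s)%N by rewrite index_mem.
rewrite (bigD1 (Ordinal hi)) //= eqxx mul1r nth_index // big1 ?addr0 //.
move=> j; rewrite -val_eqE /= => /negbTE ->; by rewrite mul0r.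
Qed.

Lemma char_polyA n (M : 'M[K]_n) : (forall i j, A (M i j)) -> polyA (char_poly M).
Proof.
move=> hM; rewrite /char_poly /determinant.
apply: (big_ind polyA); [exact: polyA_0|exact: polyA_D|] => s _.
apply: polyA_M.
  case: (odd_perm s) => /=; rewrite ?expr0 ?expr1; [apply: polyA_N; exact: polyA_1|exact: polyA_1].
apply: (big_ind polyA); [exact: polyA_1|exact: polyA_M|] => i _.
rewrite /char_poly_mx !mxE; apply: polyA_B; last by apply: polyA_C.
case: (i == s i) => /=; [rewrite mulr1n; exact: polyA_X|rewrite mulr0n; exact: polyA_0].
Qed.

Hypothesis icA : integrally_closed A.

Lemma det_trick (I : K -> Prop) (s : seq K) z :
  (forall x, I x <-> Defs.span A s x) -> (exists x, I x /\ x != 0) ->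
  (forall x, I x -> I (z * x)) -> A z.
Proof.
move=> hs [x0 [Ix0 x0n]] hz.
pose n := size s.
have hm : forall i : 'I_n, exists c : 'I_n -> K,
    (forall j, A (c j)) /\ z * s`_i = \sum_(j < n) c j * s`_j.
  move=> i; apply/hs; apply: hz; apply/hs; apply: span_in'; exact: mem_nth.
have [m hmP] := fin_all_exists hm.
pose M : 'M[K]_n := \matrix_(i, j) m i j.
pose v : 'cV[K]_n := \col_i s`_i.
pose N := z%:M - M.
have Nv : N *m v = 0.
  apply/matrixP => i k; rewrite /N mulmxBl mul_scalar_mx !mxE.
  rewrite (proj2 (hmP i)); apply/eqP; rewrite subr_eq0; apply/eqP; apply: eq_bigr => j _.
  by rewrite !mxE.
have dv : \det N *: v = 0.
  by rewrite -mul_scalar_mx -mul_adj_mx -mulmxA Nv mulmx0.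
have vn : v != 0.
  apply/eqP => v0; move: Ix0 => /hs [c [_ hc]]; move/eqP: x0n; apply; rewrite hc.
  rewrite big1 // => i _; have := congr1 (fun w : 'cV[K]_n => w i ord0) v0; rewrite !mxE => ->.
  by rewrite mulr0.
have d0 : \det N = 0.
  by apply/eqP; move/eqP: dv; rewrite scaler_eq0 (negbTE vn) orbF.
apply: icA; exists (char_poly M); split.
- exact: char_poly_monic.
- by apply: char_polyA => i j; rewrite mxE; case: (hmP i).
- apply/eqP; rewrite -horner_evalE /char_poly -det_map_mx -d0; congr (\det _).
  apply/matrixP => i j; rewrite !mxE /N.
  by rewrite rmorphB rmorphMn /= !horner_evalE hornerX hornerC.
Qed.

End Three.

Section Four.
Variable K : fieldType.
Variable A : K -> Prop.
Hypothesis hD : dedekind A.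
Implicit Types I J L P Q : K -> Prop.

Let sA : subring A. Proof. by case: hD. Qed.
Let nA : noetherian A. Proof. by case: hD. Qed.
Let icA : integrally_closed A. Proof. by case: hD. Qed.
Let dA : dim_le1 A. Proof. by case: hD. Qed.

Let a0 := A0 sA.
Let a1 := A1 sA.
Let aB := AB sA.
Let aD := AD sA.
Let aM := AM sA.
Let aN := AN sA.

Definition nz I := exists x, I x /\ x != 0.
Definition prodl (ps : seq (K -> Prop)) := foldr (@idprod K) A ps.

Definition addx P x := fun w => exists p a, [/\ P p, A a & w = p + a * x].

Lemma ideal_addx P x : ideal A P -> A x -> ideal A (addx P x).
Proof.
move=> [[P0 PD PM] PA] hx; split; last by move=> w [p [a [hp ha ->]]]; apply: aD; [apply: PA|apply: aM].
split.
- by exists 0, 0; split=> //; rewrite mul0r addr0.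
- move=> u w [p [a [hp ha ->]]] [q [b [hq hb ->]]]; exists (p + q), (a + b); split.
  + exact: PD.
  + exact: aD.
  + by rewrite mulrDl addrACA.
- move=> c w hc [p [a [hp ha ->]]]; exists (c * p), (c * a); split.
  + exact: PM.
  + exact: aM.
  + by rewrite mulrDr mulrA.
Qed.

Lemma addx_sub P x : ideal A P -> forall w, P w -> addx P x w.
Proof. by move=> _ w hw; exists w, 0; split=> //; rewrite mul0r addr0. Qed.

Lemma addx_x P x : ideal A P -> addx P x x.
Proof. by move=> [[P0 _ _] _]; exists 0, 1; split=> //; rewrite mul1r add0r. Qed.

Lemma ideal1 I : ideal A I -> I 1 -> forall x, A x -> I x.
Proof. by move=> [[_ _ IM] _] h1 x hx; rewrite -(mulr1 x); apply: IM. Qed.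

Lemma maximal_prime P : maximal_ideal A P -> prime_ideal A P.
Proof.
move=> [hP nP1 hmax]; split=> // x y hx hy hxy.
case: (classic (P x)) => Px; [by left|right].
have [J1|JP] := hmax _ (ideal_addx hP hx) (addx_sub x hP).
  move: J1 => [p [a [hp ha e]]].
  have -> : y = p * y + a * (x * y) by rewrite mulrA -mulrDl -e mul1r.
  case: hP => [[_ PD PM] PA]; apply: PD; rewrite ?(mulrC p); apply: PM => //.
exfalso; apply: Px; apply/JP; exact: addx_x.
Qed.

Lemma ideal_prodl ps : (forall Q, List.In Q ps -> ideal A Q) -> ideal A (prodl ps).
Proof.
elim: ps => [|Q ps IH] h /=; first by split; [apply: (submodA sA)|].
apply: (ideal_ip sA); [by apply: h; left|by apply: IH => R hR; apply: h; right].
Qed.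

Lemma prod_in_prime P ps : prime_ideal A P -> (forall Q, List.In Q ps -> ideal A Q) ->
  (forall x, prodl ps x -> P x) -> exists Q, List.In Q ps /\ forall x, Q x -> P x.
Proof.
move=> [hP nP1 pP]; elim: ps => [|Q ps IH] hid hsub /=.
  by exfalso; apply: nP1; apply: hsub; apply: a1.
case: (classic (forall x, Q x -> P x)) => hQ; first by exists Q; split=> //; left.
have [q [Qq nPq]] : exists q, Q q /\ ~ P q.
  by apply: NNPP => hn; apply: hQ => x Qx; apply: NNPP => nPx; apply: hn; exists x.
have [R [hR1 hR2]] : exists R, List.In R ps /\ forall x, R x -> P x.
  apply: IH; first by move=> R hR; apply: hid; right.
  move=> w hw.
  have hq : A q by case: (hid Q (or_introl erefl)) => _; apply.
  have hw' : A w by case: (ideal_prodl (fun R hR => hid R (or_intror hR))) => _; apply.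
  by case: (pP q w hq hw' (hsub _ (ip_mul Qq hw))).
by exists R; split=> //; right.
Qed.

Lemma prodl_rem Q ps : List.In Q ps -> exists qs,
  [/\ prodl ps = idprod Q (prodl qs), (forall R, List.In R qs -> List.In R ps)
    & size qs = (size ps).-1].
Proof.
elim: ps => [|P ps IH] //= [->|hQ]; first by exists ps; split=> // R; right.
have [qs [e hs hsz]] := IH hQ; exists (P :: qs); split.
- by rewrite /= e ipAC.
- by move=> R /= [->|hR]; [left|right; apply: hs].
- rewrite /= hsz; case: ps {IH e hs hsz} hQ => //.
Qed.

Lemma submod_prodl ps : submod A (prodl ps).
Proof. elim: ps => [|P ps IH] /=; [exact: (submodA sA) | exact: (submod_ipr _ IH)]. Qed.

Lemma prodl_cat ps qs : prodl (ps ++ qs) = idprod (prodl ps) (prodl qs).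
Proof.
elim: ps => [|P ps IH] /=; first by rewrite (ipAl sA) //; apply: submod_prodl.
by rewrite IH ipA.
Qed.


Lemma nz_sub I J : nz I -> (forall x, I x -> J x) -> nz J.
Proof. by move=> [x [hx nx]] h; exists x; split=> //; apply: h. Qed.

Lemma ip_addx P x y : ideal A P -> A x -> A y -> forall w, idprod (addx P x) (addx P y) w -> P (x * y) -> P w.
Proof.
move=> [[P0 PD PM] PA] hx hy w hw hxy; move: w hw; apply: (@ip_ind _ _ _ P) => //.
move=> u v [p [a [hp ha ->]]] [q [b [hq hb ->]]].
rewrite mulrDl !mulrDr; apply: (PD); apply: (PD).
- by rewrite mulrC; apply: (PM) => //; apply: PA.
- by rewrite mulrC; apply: (PM) => //; apply: aM.
- by apply: (PM) => //; apply: aM.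
- by rewrite mulrACA; apply: (PM) => //; apply: aM.
Qed.

Lemma pideal Q : prime_ideal A Q -> ideal A Q. Proof. by case. Qed.

Definition primes_ok ps := forall Q, List.In Q ps -> prime_ideal A Q /\ nz Q.

Lemma primes_below I : ideal A I -> nz I ->
  exists ps, primes_ok ps /\ forall x, prodl ps x -> I x.
Proof.
move=> hI nI; apply: NNPP => hno.
pose T := fun J => nz J /\ ~ exists ps, primes_ok ps /\ forall x, prodl ps x -> J x.
have [P [hP [nP hnoP] hmax]] := maxp sA nA (T:=T) (ex_intro _ I (conj hI (conj nI hno))).
case: (classic (P 1)) => P1.
  by apply: hnoP; exists [::]; split=> // x hx; apply: (ideal1 hP P1).
case: (classic (prime_ideal A P)) => pP.
  apply: hnoP; exists [:: P]; split; first by move=> Q [<-|] //; split.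
  by rewrite /= (ipAr sA); [|case: hP].
have [x [y [hx hy hxy nPx nPy]]] : exists x y, [/\ A x, A y, P (x * y), ~ P x & ~ P y].
  apply: NNPP => hn; apply: pP; split=> // x y hx hy hxy.
  case: (classic (P x)) => ?; [by left|]; case: (classic (P y)) => ?; [by right|].
  by exfalso; apply: hn; exists x, y.
have hJ z : A z -> ~ P z -> exists ps, primes_ok ps /\ forall w, prodl ps w -> addx P z w.
  move=> hz nPz; apply: NNPP => hn.
  have := hmax _ (ideal_addx hP hz) (conj (nz_sub nP (addx_sub z hP)) hn) (addx_sub z hP) z (addx_x z hP).
  exact: nPz.
have [ps [ops hps]] := hJ x hx nPx.
have [qs [oqs hqs]] := hJ y hy nPy.
apply: hnoP; exists (ps ++ qs); split.
  by move=> Q hQ; case: (List.in_app_or _ _ _ hQ) => [/ops|/oqs].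
move=> w; rewrite prodl_cat => hw; apply: (ip_addx hP hx hy _ hxy).
exact: ip_sub hps hqs _ hw.
Qed.

Lemma inv_big P : maximal_ideal A P -> nz P -> exists z, inv A P z /\ ~ A z.
Proof.
move=> mP [a [Pa an]].
have [hP nP1 hmaxP] := mP.
have pP := maximal_prime mP.
have Aa : A a by case: hP => _; apply.
have hpa : ideal A (pr A a).
  split; first exact: submod_pr.
  by move=> x [c [hc ->]]; apply: aM.
have [ps [ops hps]] := primes_below hpa (ex_intro _ a (conj (pr_in sA a) an)).
move: {2}(size ps) (erefl (size ps)) => n; elim: n ps ops hps => [|n IH] ps ops hps hn.
  case: ps hn ops hps => // _ _ hps; exfalso; apply: nP1.
  have [c [hc e]] := hps 1 a1.
  by case: hP => [[_ _ PM] _]; rewrite e; apply: PM.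
have hpsP : forall x, prodl ps x -> P x.
  move=> x /hps [c [hc ->]]; case: hP => [[_ _ PM] _]; exact: PM.
have [Q [inQ QP]] := prod_in_prime pP (fun Q hQ => pideal (proj1 (ops Q hQ))) hpsP.
have mQ : maximal_ideal A Q by apply: dA; case: (ops Q inQ).
have eQ : Q = P.
  case: mQ => hQ nQ1 hmQ; case: (hmQ P hP QP) => [h1|h]; [by exfalso; apply: nP1 | by apply: esym; apply: seteq].
have [qs [e hin hsz]] := prodl_rem inQ.
case: (classic (forall x, prodl qs x -> pr A a x)) => hq.
  apply: (IH qs) => //; last by rewrite hsz hn.
  by move=> R hR; apply: ops; apply: hin.
have [b [qb nb]] : exists b, prodl qs b /\ ~ pr A a b.
  by apply: NNPP => hn'; apply: hq => x hx; apply: NNPP => h; apply: hn'; exists x.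
exists (b / a); split.
  move=> p hp; have : prodl ps (p * b) by rewrite e eQ; apply: ip_mul.
  move=> /hps [c [hc ec]].
  by rewrite mulrAC (mulrC b) ec mulfK.
move=> hz; apply: nb; exists (b / a); split=> //; by rewrite divfK.
Qed.

End Four.

Section Five.
Variable K : fieldType.
Variable A : K -> Prop.
Hypothesis hD : dedekind A.
Implicit Types I J L P Q : K -> Prop.

Let sA : subring A. Proof. by case: hD. Qed.
Let nA : noetherian A. Proof. by case: hD. Qed.
Let icA : integrally_closed A. Proof. by case: hD. Qed.
Let dA : dim_le1 A. Proof. by case: hD. Qed.

Let a0 := A0 sA.
Let a1 := A1 sA.
Let aB := AB sA.
Let aD := AD sA.
Let aM := AM sA.
Let aN := AN sA.

Lemma submod_inv I : submod A (inv A I).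
Proof.
split.
- by move=> i _; rewrite mul0r.
- by move=> x y hx hy i hi; rewrite mulrDl; apply: aD; [apply: hx|apply: hy].
- by move=> a x ha hx i hi; rewrite -mulrA; apply: aM => //; apply: hx.
Qed.

Lemma inv_A I : ideal A I -> forall a, A a -> inv A I a.
Proof. by move=> [_ IA] a ha i hi; apply: aM => //; apply: IA. Qed.

Lemma max_above I : ideal A I -> ~ I 1 -> exists M, maximal_ideal A M /\ forall x, I x -> M x.
Proof.
move=> hI nI1.
pose T := fun J => (forall x, I x -> J x) /\ ~ J 1.
have [M [hM [IM nM1] hmax]] := maxp sA nA (T:=T) (ex_intro _ I (conj hI (conj (fun x h => h) nI1))).
exists M; split=> //; split=> // J hJ MJ.
case: (classic (J 1)) => J1; [by left|right] => x; split; last exact: MJ.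
apply: hmax => //; split=> // y hy; apply: MJ; exact: IM.
Qed.

Lemma invertible1 I : ideal A I -> nz I -> idprod I (inv A I) 1.
Proof.
move=> hI nI; apply: NNPP => hno.
pose T := fun J => nz J /\ ~ idprod J (inv A J) 1.
have [P [hP [nP hnoP] hmax]] := maxp sA nA (T:=T) (ex_intro _ I (conj hI (conj nI hno))).
case: (classic (P 1)) => P1.
  by apply: hnoP; rewrite -(mulr1 1); apply: ip_mul => //; apply: inv_A.
have [M [mM PM]] := max_above hP P1.
have [z [zM nz]] := inv_big hD mM (nz_sub nP PM).
pose L := idprod P (inv A M).
have PL : forall x, P x -> L x.
  by move=> x hx; rewrite -(mulr1 x); apply: ip_mul => //; apply: inv_A => //; case: mM.
have hL : ideal A L.
  split; first by apply: submod_ip; case: hP.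
  apply: (@ip_ind _ _ _ A) => // i w hi hw; rewrite mulrC; apply: hw; exact: PM.
case: (classic (forall x, L x -> P x)) => LP.
  apply: nz; have [s [_ hs]] := nA hP.
  apply: (det_trick sA icA hs nP) => x hx; apply: LP; rewrite mulrC; exact: ip_mul.
have nL : ~ T L.
  move=> TL; apply: LP => x hx; exact: (hmax L hL TL PL).
have L1 : idprod L (inv A L) 1.
  apply: NNPP => h; apply: nL; split=> //; exact: nz_sub nP PL.
apply: hnoP; move: L1; rewrite /L ipA; apply: ip_sub => // w.
apply: (@ip_ind _ _ _ (inv A P)); [by case: (submod_inv P)|by case: (submod_inv P)|].
move=> u v hu hv i hi; rewrite [u * v]mulrC -mulrA (mulrC u); apply: hv; exact: ip_mul.
Qed.

Lemma ip_inv I : ideal A I -> nz I -> idprod I (inv A I) = A.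
Proof.
move=> hI nI; apply: seteq2.
  apply: (@ip_ind _ _ _ A) => // i w hi hw; rewrite mulrC; exact: hw.
move=> x hx; have [_ _ SM] : submod A (idprod I (inv A I)) by apply: submod_ip; case: hI.
by rewrite -(mulr1 x); apply: SM => //; apply: invertible1.
Qed.

End Five.

Section Six.
Variable K : fieldType.
Variable A : K -> Prop.
Hypothesis hD : dedekind A.
Implicit Types I J L P Q B : K -> Prop.

Let sA : subring A. Proof. by case: hD. Qed.
Let fA : is_frac_field A. Proof. by case: hD. Qed.
Let a0 := A0 sA.
Let a1 := A1 sA.
Let aB := AB sA.
Let aD := AD sA.
Let aM := AM sA.
Let aN := AN sA.

Lemma ip_mulmul P Q R S X Y : idprod P Q X -> idprod R S Y ->
  idprod (idprod P R) (idprod Q S) (X * Y).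
Proof.
move=> hX hY; move: X hX; apply: (@ip_ind _ _ _ (fun X => idprod (idprod P R) (idprod Q S) (X * Y))).
- by rewrite mul0r; apply: ip_0.
- by move=> x y hx hy; rewrite mulrDl; apply: ip_add.
move=> p q hp hq; move: Y hY; apply: (@ip_ind _ _ _ (fun Y => idprod (idprod P R) (idprod Q S) (p * q * Y))).
- by rewrite mulr0; apply: ip_0.
- by move=> x y hx hy; rewrite mulrDr; apply: ip_add.
move=> r s hr hs; rewrite mulrACA; apply: ip_mul; exact: ip_mul.
Qed.

Lemma ip_sring B : subring B -> forall x, idprod B B x -> B x.
Proof.
move=> sB; apply: (@ip_ind _ _ _ B); [exact: A0 sB|exact: AD sB|exact: AM sB].
Qed.

Lemma pr_ip y B : forall w, idprod (pr A y) B w -> subring B -> (forall x, A x -> B x) ->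
  exists b, B b /\ w = y * b.
Proof.
move=> w hw sB AB'; move: w hw; apply: (@ip_ind _ _ _ (fun w => exists b, B b /\ w = y * b)).
- by exists 0; split; [exact: A0 sB|rewrite mulr0].
- by move=> x z [b [hb ->]] [c [hc ->]]; exists (b + c); split; [exact: (AD sB hb hc)|rewrite mulrDr].
move=> i j [c [hc ->]] hj; exists (c * j); split; first by apply: (AM sB) => //; apply: AB'.
by rewrite mulrCA mulrA.
Qed.

Lemma idpow_in I n b : I b -> idpow A I n (b ^+ n).
Proof.
move=> hb; elim: n => [|n IH]; first by rewrite expr0.
by rewrite exprSr; apply: ip_mul.
Qed.

Lemma idpow_le I n : ideal A I -> (0 < n)%N -> forall x, idpow A I n x -> I x.
Proof.
move=> hI; case: n => [|n] // _ x /= hx.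
rewrite -(ipAl sA (proj1 hI)); move: hx; apply: ip_sub => // y.
by case: (ideal_idpow sA n hI) => _; apply.
Qed.

Lemma tor_loc : torsion_class_group A -> forall B, overring A B -> is_localization A B.
Proof.
move=> tor B [sB AB'].
exists (fun s => [/\ A s, s != 0 & B s^-1]); split.
- by move=> s [].
- by split; rewrite ?invr1 ?oner_neq0 //; apply: (A1 sB).
- move=> s t [hs ns bs] [ht nt bt]; split; [exact: aM|by rewrite mulf_neq0|].
  by rewrite invfM; apply: (AM sB).
move=> x; split; last first.
  by move=> [a [s [ha [_ _ bs] ->]]]; apply: (AM sB) => //; apply: AB'.
move=> Bx; have [a [b [ha hb bn ex]]] := fA x.
pose I := fun c => A c /\ A (c * x).
have hI : ideal A I.
  split; last by move=> c [].
  split.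
  - by split; rewrite ?mul0r.
  - by move=> c d [hc hcx] [hd hdx]; split; [apply: aD|rewrite mulrDl; apply: aD].
  - by move=> c d hc [hd hdx]; split; [apply: aM|rewrite -mulrA; apply: aM].
have ea : a = b * x by rewrite ex mulrC divfK.
have Ib : I b by split=> //; rewrite ex mulrC divfK.
pose J := addx A (pr A b) a.
have hpb : ideal A (pr A b).
  by split; [apply: submod_pr|move=> w [c [hc ->]]; apply: aM].
have hJ : ideal A J by apply: ideal_addx.
have nJ : nz J by exists b; split=> //; apply: addx_sub => //; apply: pr_in.
have J1 := invertible1 hD hJ nJ.
have IB1 : idprod I B 1.
  move: J1; apply: (@ip_ind _ _ _ (idprod I B)); [exact: ip_0|exact: ip_add|].
  move=> j w [p [c [[d [hd ->]] hc ->]]] hw.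
  have -> : (d * b + c * a) * w = (b * w) * (d + c * x).
    by rewrite ea; ring.
  apply: ip_mul.
    have Jb : J b by apply: addx_sub => //; apply: pr_in.
    have Ja : J a by apply: addx_x.
    split; first by rewrite mulrC; apply: hw.
    by rewrite mulrAC mulrC -ea; apply: hw.
  by apply: (AD sB); [apply: (AB')|apply: (AM sB) => //; apply: (AB')].
have fI : frac_ideal A I.
  split; [by case: hI|by exists b|exists 1; split=> //; [exact: oner_neq0|by move=> z [hz _]; rewrite mul1r]].
have [n [n0 hn]] := tor I fI.
have [y ey] := (principalE _ _).1 hn.
have Iy : I y by apply: (idpow_le hI n0); rewrite ey; apply: pr_in.
have yn : y != 0.
  apply/eqP => y0; have := idpow_in n Ib; rewrite ey y0 => -[c [_]].
  rewrite mulr0 => /eqP; rewrite expf_eq0 (negbTE bn) andbF //.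
have P1 : forall k, idprod (idpow A I k) B 1.
  elim=> [|k IH]; first by rewrite -(mulr1 1); apply: ip_mul; [|apply: (A1 sB)].
  rewrite idpowS; have := ip_mulmul IH IB1; rewrite mulr1; apply: ip_sub => // z.
  exact: ip_sring.
have := P1 n; rewrite ey => /pr_ip /(_ sB AB') [be [hbe e1]].
have yinv : y^-1 = be by rewrite -[y^-1]mulr1 e1 mulKf.
exists (y * x), y; split.
- by case: Iy.
- by split; [case: Iy|by []|rewrite yinv].
- by rewrite mulrC mulKf.
Qed.


Lemma loc_wc B : overring A B -> is_localization A B -> well_centered A B.
Proof.
move=> [sB AB'] [S [hS S1 SM eB]] b /eB [a [s [ha hs ->]]].
have [As sn] := hS s hs.
exists s; split; last by rewrite mulrC divfK.
split=> //.
- by apply/eB; exists s, 1; split=> //; rewrite divr1.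
- by apply/eB; exists 1, s; split=> //; rewrite div1r.
Qed.

Lemma wc_gen B b : overring A B -> gen_by A B b -> (forall u, unit_in B u <-> unit_in A u) ->
  well_centered A B -> forall x, B x -> A x.
Proof.
move=> [sB AB'] gB eU wc x /gB [p [hp ->]].
apply: (horner_in sA (fun y h => h) hp).
have Bb : B b by apply/gB; exists 'X; split; [exact: polyA_X sA|rewrite hornerX].
have [u [/eU [hu un hui] hub]] := wc b Bb.
by rewrite -(mulKf un b); apply: aM.
Qed.

End Six.

Section Seven.
Variable K : fieldType.
Variable A : K -> Prop.
Hypothesis hD : dedekind A.
Implicit Types I J L P Q B X Y : K -> Prop.

Let sA : subring A. Proof. by case: hD. Qed.
Let nA : noetherian A. Proof. by case: hD. Qed.
Let a0 := A0 sA.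
Let a1 := A1 sA.
Let aB := AB sA.
Let aD := AD sA.
Let aM := AM sA.
Let aN := AN sA.

Definition tors X := exists n, (0 < n)%N /\ principal A (idpow A X n).

Lemma torsE X : tors X <-> exists n y, (0 < n)%N /\ idpow A X n = pr A y.
Proof.
split=> [[n [n0 /principalE [y hy]]]|[n [y [n0 hy]]]]; first by exists n, y.
by exists n; split=> //; apply/principalE; exists y.
Qed.

Lemma tors_ip X Y : submod A X -> submod A Y -> tors X -> tors Y -> tors (idprod X Y).
Proof.
move=> sX sY /torsE [m [x [m0 hx]]] /torsE [n [y [n0 hy]]].
apply/torsE; exists (m * n)%N, (x ^+ n * y ^+ m); split; first by rewrite muln_gt0 m0.
rewrite idpow_ip // (idpowM sA) // (mulnC m) (idpowM sA) // hx hy !idpow_pr //.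
by rewrite ip_pr.
Qed.

Lemma pr_mulK c X : c != 0 -> submod A X -> idprod (pr A c^-1) (idprod (pr A c) X) = X.
Proof.
by move=> cn sX; rewrite -ipA ip_pr // mulVf // pr1 // ipAl.
Qed.

Lemma tors_scale c X : c != 0 -> submod A X -> tors (idprod (pr A c) X) -> tors X.
Proof.
move=> cn sX /torsE [n [y [n0 hy]]]; apply/torsE; exists n, (c ^- n * y); split=> //.
move: hy; rewrite idpow_ip //; last exact: submod_pr.
rewrite idpow_pr // => hy.
rewrite -[idpow A X n](@pr_mulK (c ^+ n)); [|exact: expf_neq0|exact: submod_idpow].
by rewrite hy ip_pr.
Qed.

Lemma tors_A : tors A.
Proof. by apply/torsE; exists 1%N, 1; split=> //; rewrite idpow1 ?pr1 //; apply: submodA. Qed.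


Lemma exists_bad : ~ torsion_class_group A -> exists P,
  [/\ ideal A P, nz P, ~ tors P &
      forall J, ideal A J -> nz J -> ~ tors J -> (forall x, P x -> J x) -> forall x, J x -> P x].
Proof.
move=> ntor.
have [I [[sI [x0 [Ix0 x0n]] [d [Ad dn dI]]] hI]] : exists I, frac_ideal A I /\ ~ tors I.
  apply: NNPP => h; apply: ntor => I fI; apply: NNPP => h2; apply: h; exists I; split=> //.
pose I' := idprod (pr A d) I.
have hI' : ideal A I'.
  split; first by apply: submod_ipr.
  apply: (@ip_ind _ _ _ A) => // c i [e [he ->]] hi; rewrite -mulrA; apply: aM => //; exact: dI.
have nI' : nz I' by exists (d * x0); split; [apply: ip_mul => //; apply: pr_in|rewrite mulf_neq0].
have tI' : ~ tors I' by move/(tors_scale dn sI).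
have [P [hP [nP tP] hmax]] := maxp sA nA (T:=fun J => nz J /\ ~ tors J)
   (ex_intro _ I' (conj hI' (conj nI' tI'))).
by exists P; split=> // J hJ nJ tJ PJ; apply: hmax.
Qed.

Lemma bad_maximal P : ideal A P -> nz P -> ~ tors P ->
  (forall J, ideal A J -> nz J -> ~ tors J -> (forall x, P x -> J x) -> forall x, J x -> P x) ->
  maximal_ideal A P.
Proof.
move=> hP nP tP hmax.
have nP1 : ~ P 1.
  move=> P1; apply: tP; have -> : P = A; last exact: tors_A.
  by apply: seteq2; [case: hP|apply: ideal1].
split=> // J hJ PJ; case: (classic (J 1)) => J1; [by left|right].
suff JP : forall x, J x -> P x by move=> x; split; [apply: JP|apply: PJ].
apply: NNPP => JnP.
have nJ : nz J := nz_sub nP PJ.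
have tJ : tors J.
  by apply: NNPP => tJ; apply: JnP; apply: hmax.
have sJ := proj1 hJ.
have eJ := ip_inv hD hJ nJ.
pose L := idprod P (inv A J).
have hL : ideal A L.
  split; first by apply: submod_ip; case: hP.
  apply: (@ip_ind _ _ _ A) => // p w hp hw; rewrite mulrC; apply: hw; exact: PJ.
have PL : forall x, P x -> L x.
  move=> x hx; rewrite -(mulr1 x); apply: ip_mul => //; apply: inv_A => //.
have eP : idprod J L = P by rewrite /L ipAC eJ ipAr //; case: hP.
case: (classic (forall x, L x -> P x)) => LP.
  have eL : L = P by apply: seteq2.
  have eP' := ip_inv hD hP nP.
  have eiJ : inv A J = A.
    have : idprod (inv A P) L = idprod (inv A P) P by rewrite eL.
    rewrite /L -ipA (ipC (inv A P)) eP' (ipAl sA); last exact: submod_inv.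
    by [].
  apply: J1; move: eJ; rewrite eiJ ipAr // => ->; exact: a1.
apply: tP; rewrite -eP; apply: tors_ip => //; first by case: hL.
apply: NNPP => tL; apply: LP; apply: hmax => //.
exact: nz_sub nP PL.
Qed.

End Seven.

Section Eight.
Variable K : fieldType.
Variable A : K -> Prop.
Hypothesis hD : dedekind A.
Implicit Types I J L Q B X Y : K -> Prop.

Let sA : subring A. Proof. by case: hD. Qed.
Let a0 := A0 sA.
Let a1 := A1 sA.
Let aB := AB sA.
Let aD := AD sA.
Let aM := AM sA.
Let aN := AN sA.

Variable P : K -> Prop.
Hypothesis mP : maximal_ideal A P.
Hypothesis nP : nz P.
Hypothesis ntP : ~ tors A P.

Let hP : ideal A P. Proof. by case: mP. Qed.
Let sP : submod A P. Proof. by case: hP. Qed.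
Let eP : idprod P (inv A P) = A. Proof. exact: ip_inv. Qed.

Lemma cancelP X Y : submod A X -> submod A Y -> idprod X P = idprod Y P -> X = Y.
Proof.
move=> sX sY e.
have : idprod (idprod X P) (inv A P) = idprod (idprod Y P) (inv A P) by rewrite e.
by rewrite !ipA eP !(ipAr sA).
Qed.

Lemma cancelPn n X Y : submod A X -> submod A Y ->
  idprod X (idpow A P n) = idprod Y (idpow A P n) -> X = Y.
Proof.
elim: n X Y => [|n IH] X Y sX sY /=; first by rewrite !(ipAr sA).
rewrite -!ipA => e; apply: IH => //; apply: cancelP => //; exact: submod_ip.
Qed.

Lemma PA x : P x -> A x. Proof. by case: hP => _; apply. Qed.

Lemma power_lemma N J : ideal A J -> (forall x, idpow A P N x -> J x) ->
  exists j, J = idpow A P j.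
Proof.
elim: N J => [|N IH] J hJ hN.
  by exists 0%N; apply: seteq2 => //; case: hJ.
case: (classic (J 1)) => J1.
  by exists 0%N; apply: seteq2; [case: hJ|apply: ideal1].
have JP : forall x, J x -> P x.
  move=> x Jx; apply: NNPP => nPx; apply: J1.
  have Ax : A x by case: hJ => _; apply.
  have [m1|eq] := (match mP with And3 _ _ h => h end) _ (ideal_addx hD hP Ax) (addx_sub hD x hP).
    2: by exfalso; apply: nPx; apply/eq; apply: (addx_x hD x hP).
  move: m1 => [p [a [hp ha e1]]].
  have hk : forall k, exists j q, [/\ J j, idpow A P k q & 1 = j + q].
    elim=> [|k [j [q [hj hq e]]]]; first by exists 0, 1; split=> //; [case: hJ => [[]]|rewrite add0r].
    exists (j * (p + a * x) + q * a * x), (q * p); split.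
    - case: hJ => [[_ JD JM] _]; apply: JD.
        by rewrite mulrC; apply: JM => //; apply: aD => //; [apply: PA|apply: aM].
      apply: JM => //; apply: aM => //; case: (ideal_idpow sA k hP) => _; apply => //.
    - by rewrite idpowS; apply: ip_mul.
    - have <- : (j + q) * (p + a * x) = 1 by rewrite -e -e1 mulr1.
      ring.
  have [j [q [hj hq e]]] := hk N.+1.
  by rewrite e; case: hJ => [[_ JD _] _]; apply: JD => //; apply: hN.
pose L := idprod (inv A P) J.
have hL : ideal A L.
  split; first by apply: submod_ipr; case: hJ.
  apply: (@ip_ind _ _ _ A) => // w j hw hj; apply: hw; exact: JP.
have NL : forall x, idpow A P N x -> L x.
  move=> x hx.
  have : idprod (inv A P) (idprod P (idpow A P N)) x.
    rewrite -ipA (ipC _ P) eP (ipAl sA) //; exact: submod_idpow.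
  apply: ip_sub => // y; rewrite -ipC; exact: hN.
have [j ej] := IH L hL NL.
exists j.+1; rewrite idpowS ipC -ej /L -ipA eP (ipAl sA) //; by case: hJ.
Qed.


Lemma idpowA n z : idpow A P n z -> A z.
Proof. by case: (ideal_idpow sA n hP) => _; apply. Qed.

Section Y.
Variable y : K.
Hypothesis yP : inv A P y.

Lemma yk n : forall k, (k <= n)%N -> forall z, idpow A P n z -> A (y ^+ k * z).
Proof.
elim: n => [|n IH] k.
  by rewrite leqn0 => /eqP -> z hz; rewrite expr0 mul1r.
move=> hk z; apply: (@ip_ind _ _ _ (fun z => A (y ^+ k * z))).
- by rewrite mulr0.
- by move=> a b ha hb; rewrite mulrDr; apply: aD.
move=> w p hw hp; case: k hk => [|k] hk.
  by rewrite expr0 mul1r; apply: aM; [apply: idpowA hw|apply: PA].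
rewrite exprSr mulrACA; apply: aM; first by apply: IH.
by apply: yP.
Qed.

Lemma horner_P f : polyA A f -> forall z, idpow A P (size f) z -> A (f.[y] * z).
Proof.
move=> hf z hz; rewrite horner_coef mulr_suml.
apply: (big_ind A) => // i _; rewrite -mulrA; apply: aM => //.
exact: (yk (ltnW (ltn_ord i)) hz).
Qed.
End Y.

Lemma unit_lemma u : u != 0 -> (exists n, forall z, idpow A P n z -> A (u * z)) ->
  (exists m, forall z, idpow A P m z -> A (u^-1 * z)) -> A u /\ A u^-1.
Proof.
move=> un [n hn] [m hm].
pose Jn := idprod (pr A u) (idpow A P n).
have hJ : ideal A Jn.
  split; first by apply: submod_ip; apply: submod_pr.
  apply: (@ip_ind _ _ _ A) => // c z [a [ha ->]] hz; rewrite -mulrA; apply: aM => //; exact: hn.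
have sJ := proj1 hJ.
have hN : forall x, idpow A P (m + n) x -> Jn x.
  move=> x; rewrite (idpowD sA) //.
  apply: (@ip_ind _ _ _ Jn); [by case: sJ|by case: sJ|] => w z hw hz.
  apply: ip_mul => //; exists (u^-1 * w); split; first exact: hm.
  by rewrite mulrAC mulVf // mul1r.
have [j ej] := power_lemma hJ hN.
have spu := submod_pr sA u.
have spn k := submod_idpow sA k sP.
case: (leqP n j) => hnj.
  have e2 : pr A u = idpow A P (j - n).
    apply: (cancelPn (n:=n)) => //; rewrite -(idpowD sA) // subnK //.
  case: (posnP (j - n)) => hjn.
    have eA : pr A u = A by rewrite e2 hjn.
    split; first by rewrite -eA; apply: pr_in.
    have : pr A u 1 by rewrite eA.
    by move=> [c [hc e]]; rewrite -[u^-1]mul1r e mulfK.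
  by exfalso; apply: ntP; apply/torsE; exists (j - n)%N, u.
have e2 : idprod (pr A u) (idpow A P (n - j)) = A.
  apply: (cancelPn (n:=j)) => //; first exact: submod_ip.
  by rewrite ipA -(idpowD sA) // subnK ?(ltnW hnj) // -ej (ipAl sA) //; apply: submod_idpow.
have e3 : idpow A P (n - j) = pr A u^-1.
  rewrite -(pr_mulK hD un (spn (n - j)%N)) e2 (ipAr sA) //; exact: submod_pr.
by exfalso; apply: ntP; apply/torsE; exists (n - j)%N, u^-1; split=> //; rewrite subn_gt0.
Qed.

End Eight.

Section Nine.
Variable K : fieldType.
Variable A : K -> Prop.
Hypothesis hD : dedekind A.

Let sA : subring A. Proof. by case: hD. Qed.

Lemma noB_tor : (~ exists B : K -> Prop,
            [/\ overring A B, (exists x, B x /\ ~ A x),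
                (exists b, gen_by A B b)
              & forall u, unit_in B u <-> unit_in A u]) -> torsion_class_group A.
Proof.
move=> hno; apply: NNPP => ntor.
have [P [hP nP tP hmax]] := exists_bad hD ntor.
have mP := bad_maximal hD hP nP tP hmax.
have [y [yP ny]] := inv_big hD mP nP.
apply: hno.
pose B := fun x => exists p, polyA A p /\ x = p.[y].
have AB' : forall x, A x -> B x.
  by move=> x hx; exists x%:P; split; [exact: polyA_C|rewrite hornerC].
have sB : subring B.
  split.
  - by exists 0; split; [exact: polyA_0|rewrite horner0].
  - by exists 1; split; [exact: polyA_1|rewrite hornerC].
  - move=> x z [p [hp ->]] [q [hq ->]]; exists (p - q); split; first exact: polyA_B.
    by rewrite hornerD hornerN.
  - move=> x z [p [hp ->]] [q [hq ->]]; exists (p * q); split; first exact: polyA_M.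
    by rewrite hornerM.
exists B; split.
- by split.
- by exists y; split=> //; exists 'X; split; [exact: polyA_X|rewrite hornerX].
- by exists y.
move=> u; split.
  move=> [[p [hp ep]] un [q [hq eq]]].
  have hn : exists n, forall z, idpow A P n z -> A (u * z).
    by exists (size p) => z hz; rewrite ep; exact: (horner_P hD mP yP hp hz).
  have hm : exists n, forall z, idpow A P n z -> A (u^-1 * z).
    by exists (size q) => z hz; rewrite eq; exact: (horner_P hD mP yP hq hz).
  have [h1 h2] := unit_lemma hD mP nP tP un hn hm.
  by split.
by move=> [h1 h2 h3]; split=> //; apply: AB'.
Qed.

End Nine.

Unset Implicit Arguments.

Theorem proposition3p13 (K : fieldType) (A : K -> Prop) :
  dedekind A ->
  [/\ (torsion_class_group A <-> forall B, overring A B -> is_localization A B),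
      (torsion_class_group A <-> forall B, overring A B -> well_centered A B)
    & (torsion_class_group A <->
        ~ exists B : K -> Prop,
            [/\ overring A B, (exists x, B x /\ ~ A x),
                (exists b, gen_by A B b)
              & forall u, unit_in B u <-> unit_in A u])].
Proof.
move=> hD.
have TL := tor_loc hD.
have LW : (forall B, overring A B -> is_localization A B) ->
          (forall B, overring A B -> well_centered A B).
  by move=> h B ov; apply: loc_wc => //; apply: h.
have WN : (forall B, overring A B -> well_centered A B) ->
   ~ exists B : K -> Prop,
            [/\ overring A B, (exists x, B x /\ ~ A x),
                (exists b, gen_by A B b)
              & forall u, unit_in B u <-> unit_in A u].
  move=> h [B [ov [x [Bx nAx]] [b gb] eU]].
  by apply: nAx; apply: (wc_gen hD ov gb eU (h B ov)).
have NT := noB_tor hD.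
split; split=> //.
- by move=> h; apply: NT; apply: WN; apply: LW.
- by move=> h; apply: LW; apply: TL.
- by move=> h; apply: NT; apply: WN.
- by move=> h; apply: WN; apply: LW; apply: TL.
Qed.
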